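(* Let $n\ge 2$, $k\ge 1$, $i_1,\dots,i_k\in\{1,\dots,n-1\}$ and $a_1,\dots,a_k\in\mathbb{Z}$. Then $$V_n(x_{i_1}^{a_1}x_{i_2}^{a_2}\cdots x_{i_k}^{a_k})(s)=\frac{1}{(s^2+1)^k}\sum_{(j_1,\dots,j_k)\in\{0,1\}^k}P^{[a_1]}_{j_1}(s)\cdots P^{[a_k]}_{j_k}(s)\,V_n(x_{i_1}^{j_1}\cdots x_{i_k}^{j_k})(s),$$ where for $a\in\mathbb{Z}$, $P_0^{[a]}(s)=s^{3a}+(-1)^a s^{a+2}$ and $P_1^{[a]}(s)=s^{3a-1}+(-1)^{a+1}s^{a-1}$ (Laurent polynomials in $s$).
   Context: $\mathcal{B}_n$ is the Artin braid group on $n$ strands with standard generators $x_1,\dots,x_{n-1}$ ($x_i$ crosses strands $i$ and $i+1$); $\widehat{\beta}$ denotes the closure of $\beta\in\mathcal{B}_n$, an oriented link. The Jones polynomial $V_L$ of an oriented link $L$ is the Laurent polynomial in $q^{1/2}$ with value $1$ on the unknot satisfying $q^{-1}V_{L_+}-qV_{L_-}=(q^{1/2}-q^{-1/2})V_{L_0}$. One substitutes $s=q^{-1/2}$, so Jones polynomials are Laurent polynomials in $s$. For $\beta\in\mathcal{B}_n$, $V_n(\beta)=V(\widehat{\beta})$. Crossing conventions are those for which, in a braid word, the closures of $\alpha x_i^{e+2}\gamma$, $\alpha x_i^{e+1}\gamma$, $\alpha x_i^{e}\gamma$ play the roles of $L_-,L_0,L_+$ respectively (e.g. $V_2(x_1^2)=-s-s^5$).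 *)

(* Defs.v *)
From mathcomp Require Import all_boot all_order all_algebra.
Set Implicit Arguments. Unset Strict Implicit. Unset Printing Implicit Defensive.
Import Order.TTheory GRing.Theory Num.Theory.
Local Open Scope ring_scope.

(* A braid letter (i, b) stands for x_i (if b = true) or x_i^{-1} (b = false),
   with i 1-based: x_i crosses the strands in positions i and i+1. A braid word
   is a sequence of letters, read left to right (top to bottom). *)
Definition letter := (nat * bool)%type.
Definition bword := seq letter.

Definition gpow (i : nat) (a : int) : bword := nseq `|a|%N (i, (0 <= a)%R).

(* The closure diagram of a braid word w on n strands.  Points are
   (t, p) with t in 0..size w (level between crossings t-1 and t) and
   p in 0..n-1 (0-based strand position).  A Kauffman state c assigns to
   crossing t either the vertical ("identity", c_t = false) smoothing or the
   horizontal cup/cap ("e", c_t = true) smoothing.  [kedge] is the resulting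
   adjacency (closure identifies level size w with level 0). *)
Definition kstep (n : nat) (w : bword) (c : seq bool)
    (x y : 'I_(size w).+1 * 'I_n) : bool :=
  let t := nat_of_ord x.1 in let p := nat_of_ord x.2 in
  let t' := nat_of_ord y.1 in let p' := nat_of_ord y.2 in
  let m := size w in
  let i t := (nth (1%N, true) w t).1 in
  let sm t := nth false c t in
  [|| [&& (t < m)%N, ~~ (sm t && ((p == (i t).-1) || (p == i t))),
          t' == t.+1 & p' == p],
      [&& (t < m)%N, sm t, p == (i t).-1, p' == i t & t' == t],
      [&& (0 < t)%N, sm t.-1, p == (i t.-1).-1, p' == i t.-1 & t' == t]
    | [&& t == m, t' == 0%N & p' == p]].

Arguments kstep : clear implicits.

Definition kedge (n : nat) (w : bword) (c : seq bool) :
    rel ('I_(size w).+1 * 'I_n) :=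
  fun x y => kstep n w c x y || kstep n w c y x.

Arguments kedge : clear implicits.

Definition kloops (n : nat) (w : bword) (c : seq bool) : nat :=
  n_comp (kedge n w c) predT.

(* weight of a crossing: includes the writhe normalisation (-A^3)^{-w}
   (up to the global sign) with A^{-2} = s. *)
Definition cross_factor {F : fieldType} (b c : bool) (s : F) : F :=
  if b then (if c then s ^+ 2 else s) else (if c then s ^- 2 else s^-1).

(* Jones polynomial V_n(w)(s) of the closure of the braid word w on n strands,
   computed by the Kauffman bracket state sum with A^{-2} = s,
   V = (-A^3)^{-writhe} <D>, loop value d = -A^2 - A^{-2} = -(s + s^{-1}).
   The sign (-1)^{writhe} equals (-1)^{size w}.  Normalisation: V(unknot) = 1,
   and s^2 V_{L+} - s^{-2} V_{L-} = (s^{-1} - s) V_{L0}, with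
   V_2(x_1^2) = -s - s^5. *)
Definition Vn {F : fieldType} (n : nat) (w : bword) (s : F) : F :=
  (-1) ^+ size w *
  \sum_(c : (size w).-tuple bool)
     (\prod_(t < size w) cross_factor (nth (1%N, true) w t).2 (nth false c t) s)
     * (- (s + s^-1)) ^+ (kloops n w c).-1.

Definition pword (k : nat) (i : 'I_k -> nat) (a : 'I_k -> int) : bword :=
  flatten [seq gpow (i j) (a j) | j <- enum 'I_k].

Definition Pcoef {F : fieldType} (j : bool) (a : int) (s : F) : F :=
  if j then s ^ (3 * a - 1) + (-1) ^ (a + 1) * s ^ (a - 1)
  else s ^ (3 * a) + (-1) ^ a * s ^ (a + 2).

(* Main.v *)
Require Import Defs.
From mathcomp Require Import all_boot all_order all_algebra.
From mathcomp Require Import zify ring.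
Set Implicit Arguments. Unset Strict Implicit. Unset Printing Implicit Defensive.
Import Order.TTheory GRing.Theory Num.Theory.

Definition kst (m : nat) (I : nat -> nat) (S : nat -> bool) (t q t' q' : nat) : bool :=
  [|| [&& (t < m)%N, ~~ (S t && ((q == (I t).-1) || (q == I t))), t' == t.+1 & q' == q],
      [&& (t < m)%N, S t, q == (I t).-1, q' == I t & t' == t],
      [&& (0 < t)%N, S t.-1, q == (I t.-1).-1, q' == I t.-1 & t' == t]
    | [&& t == m, t' == 0%N & q' == q]].

Definition kE N m I S : rel ('I_m.+1 * 'I_N) :=
  fun x y => kst m I S x.1 x.2 y.1 y.2 || kst m I S y.1 y.2 x.1 x.2.
Arguments kE : clear implicits.
Arguments kst : clear implicits.

Lemma kloopsE n w c : kloops n w c =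
  n_comp (kE n (size w) (fun t => (nth (1%N, true) w t).1) (nth false c)) predT.
Proof. by []. Qed.

Lemma kE_sym N m I S : connect_sym (kE N m I S).
Proof. by apply: sym_connect_sym => x y; rewrite /kE orbC. Qed.

Variant kst_spec m I S t q t' q' : Prop :=
 | KV of (t < m)%N & ~~ (S t && ((q == (I t).-1) || (q == I t))) & t' = t.+1 & q' = q
 | KC of (t < m)%N & S t & q = (I t).-1 & q' = I t & t' = t
 | KU of (0 < t)%N & S t.-1 & q = (I t.-1).-1 & q' = I t.-1 & t' = t
 | KL of t = m & t' = 0%N & q' = q.

Lemma kstP m (I : nat -> nat) (S : nat -> bool) t q t' q' : kst m I S t q t' q' -> kst_spec m I S t q t' q'.
Proof.
case/or4P.
- by case/and4P=> h1 h2 /eqP h3 /eqP h4; apply: KV.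
- by case/and5P=> h1 h2 /eqP h3 /eqP h4 /eqP h5; apply: KC.
- by case/and5P=> h1 h2 /eqP h3 /eqP h4 /eqP h5; apply: KU.
- by case/and3P=> /eqP h1 /eqP h2 /eqP h3; apply: KL.
Qed.

Lemma kstV m (I : nat -> nat) (S : nat -> bool) t q t' q' : (t < m)%N -> ~~ (S t && ((q == (I t).-1) || (q == I t))) ->
  t' = t.+1 -> q' = q -> kst m I S t q t' q'.
Proof. by move=> h1 h2 -> ->; rewrite /kst h1 h2 !eqxx. Qed.
Lemma kstC m (I : nat -> nat) (S : nat -> bool) t q t' q' : (t < m)%N -> S t -> q = (I t).-1 -> q' = I t -> t' = t ->
  kst m I S t q t' q'.
Proof. by move=> h1 h2 -> -> ->; rewrite /kst h1 h2 !eqxx !orbT. Qed.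
Lemma kstU m (I : nat -> nat) (S : nat -> bool) t q t' q' : (0 < t)%N -> S t.-1 -> q = (I t.-1).-1 -> q' = I t.-1 -> t' = t ->
  kst m I S t q t' q'.
Proof. by move=> h1 h2 -> -> ->; rewrite /kst h1 h2 !eqxx !orbT. Qed.
Lemma kstL m (I : nat -> nat) (S : nat -> bool) t q t' q' : t = m -> t' = 0%N -> q' = q -> kst m I S t q t' q'.
Proof. by move=> -> -> ->; rewrite /kst !eqxx !orbT. Qed.

Definition V nn m (t q : nat) : 'I_m.+1 * 'I_nn.+1 := (inord t, inord q).
Arguments V : clear implicits.

Lemma V_val nn m (x : 'I_m.+1 * 'I_nn.+1) : x = V nn m x.1 x.2.
Proof. by case: x => a b; rewrite /V !inord_val. Qed.

Lemma cV nn m (I : nat -> nat) (S : nat -> bool) t q t' q' : (t <= m)%N -> (q <= nn)%N -> (t' <= m)%N -> (q' <= nn)%N ->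
  kst m I S t q t' q' -> connect (kE nn.+1 m I S) (V nn m t q) (V nn m t' q').
Proof.
move=> h1 h2 h3 h4 h; apply: connect1; rewrite /kE /V /= !inordK //.
by rewrite h.
Qed.

Lemma cVr nn m (I : nat -> nat) (S : nat -> bool) t q t' q' : (t <= m)%N -> (q <= nn)%N -> (t' <= m)%N -> (q' <= nn)%N ->
  kst m I S t' q' t q -> connect (kE nn.+1 m I S) (V nn m t q) (V nn m t' q').
Proof.
move=> h1 h2 h3 h4 h; apply: connect1; rewrite /kE /V /= !inordK //.
by rewrite h orbT.
Qed.

Definition gv p t := if (t <= p)%N then t else t.+1.
Definition hv p t := if (t <= p)%N then t else t.-1.
Lemma gvl p t : (t <= p)%N -> gv p t = t. Proof. by rewrite /gv => ->. Qed.
Lemma gvr p t : (p < t)%N -> gv p t = t.+1. Proof. by move=> h; rewrite /gv leqNgt h. Qed.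
Lemma hvl p t : (t <= p)%N -> hv p t = t. Proof. by rewrite /hv => ->. Qed.
Lemma hvr p t : (p < t)%N -> hv p t = t.-1. Proof. by move=> h; rewrite /hv leqNgt h. Qed.

Lemma hvgv p t : hv p (gv p t) = t.
Proof. rewrite /hv /gv; case: (leqP t p) => h; first by rewrite h. by rewrite leqNgt ltnW. Qed.

Section G1.
Variables (nn m p : nat) (I I' : nat -> nat) (S S' : nat -> bool).
Hypotheses (Hp : (p <= m)%N) (HS'p : S' p = false)
  (HIl : forall t, (t < p)%N -> I' t = I t) (HSl : forall t, (t < p)%N -> S' t = S t)
  (HIr : forall t, (p <= t)%N -> I' t.+1 = I t) (HSr : forall t, (p <= t)%N -> S' t.+1 = S t).

Lemma HIr' t : (p < t)%N -> I' t = I t.-1.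
Proof. by case: t => // t h; rewrite HIr. Qed.
Lemma HSr' t : (p < t)%N -> S' t = S t.-1.
Proof. by case: t => // t h; rewrite HSr. Qed.

Local Notation big := (kE nn.+1 m.+1 I' S').
Local Notation small := (kE nn.+1 m I S).

Lemma G1a t q t' q' : (t <= m)%N -> (q <= nn)%N -> (t' <= m)%N -> (q' <= nn)%N ->
  kst m I S t q t' q' ->
  connect big (V nn m.+1 (gv p t) q) (V nn m.+1 (gv p t') q').
Proof.
move=> ht hq ht' hq' /kstP[h1 h2 e1 e2 | h1 h2 e1 e2 e3 | h1 h2 e1 e2 e3 | -> -> ->]; try subst t' q'; try subst q.
- have [tp|pt|tp] := ltngtP t p.
  + rewrite !gvl; try lia. apply: cV; try lia. apply: kstV => //; try lia.
    by rewrite HSl // HIl.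
  + rewrite (gvr pt) gvr; last lia. apply: cV; try lia. apply: kstV => //; try lia.
    by rewrite HSr' ?HIr' //; try lia.
  + subst t. rewrite gvl // gvr //.
    apply: (@connect_trans _ _ (V nn m.+1 p.+1 q)); apply: cV; try lia.
    * by apply: kstV => //; try lia; rewrite HS'p.
    * by apply: kstV => //; try lia; rewrite HSr // HIr.
- have [tp|pt|tp] := ltngtP t p.
  + rewrite !gvl; try lia. apply: cV; try lia. by apply: kstC; rewrite ?HSl ?HIl //; lia.
  + rewrite (gvr pt). apply: cV; try lia.
    by apply: kstC; rewrite ?HSr ?HIr //; lia.
  + subst t. rewrite gvl //.
    apply: (@connect_trans _ _ (V nn m.+1 p.+1 (I p).-1)); first by apply: cV; try lia;
      apply: kstV => //; try lia; rewrite HS'p.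
    apply: (@connect_trans _ _ (V nn m.+1 p.+1 (I p))).
      by apply: cV; try lia; apply: kstC; rewrite ?HSr ?HIr //; lia.
    by apply: cVr; try lia; apply: kstV => //; try lia; rewrite HS'p.
- have [tp|pt] := leqP t p.
  + rewrite gvl //. apply: cV; try lia. by apply: kstU; rewrite ?HSl ?HIl //; lia.
  + rewrite gvr //. apply: cV; try lia.
    by apply: kstU => //=; rewrite ?HSr' ?HIr' //; lia.
- rewrite (@gvl p 0) //. have [mp|pm] := leqP m p.
  + have e : m = p by lia. rewrite [in gv p m]e gvl //.
    apply: (@connect_trans _ _ (V nn m.+1 p.+1 q)); apply: cV; try lia.
    * by apply: kstV => //; try lia; rewrite HS'p.
    * by apply: kstL; lia.
  + rewrite gvr //. by apply: cV; try lia; apply: kstL.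
Qed.


Lemma G1b t q t' q' : (t <= m.+1)%N -> (q <= nn)%N -> (t' <= m.+1)%N -> (q' <= nn)%N ->
  kst m.+1 I' S' t q t' q' ->
  connect small (V nn m (hv p t) q) (V nn m (hv p t') q').
Proof.
move=> ht hq ht' hq' /kstP[h1 h2 e1 e2 | h1 h2 e1 e2 e3 | h1 h2 e1 e2 e3 | -> -> ->]; try subst t' q'; try subst q.
- have [tp|pt|tp] := ltngtP t p.
  + rewrite !hvl; try lia. apply: cV; try lia. apply: kstV => //; try lia.
    by rewrite -HSl // -HIl.
  + rewrite (hvr pt) hvr; last lia. apply: cV; try lia. apply: kstV => //; try lia.
    by rewrite -HSr' -?HIr' //; try lia; rewrite prednK //; lia.
  + subst t. by rewrite hvl // hvr //= ?connect0.
- have [tp|pt|tp] := ltngtP t p.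
  + have hI := HIl tp; have hS := HSl tp; rewrite hI in hq hq' *; rewrite hS in h2.
    rewrite !hvl; try lia. by apply: cV; try lia; apply: kstC => //; lia.
  + have hI := HIr' pt; have hS := HSr' pt; rewrite hI in hq hq' *; rewrite hS in h2.
    rewrite (hvr pt). by apply: cV; try lia; apply: kstC => //; lia.
  + by subst t; rewrite HS'p in h2.
- have [tp|pt|tp] := ltngtP t p.+1.
  + have tp' : (t.-1 < p)%N by lia.
    have hI := HIl tp'; have hS := HSl tp'; rewrite hI in hq hq' *; rewrite hS in h2.
    rewrite hvl; try lia. by apply: cV; try lia; apply: kstU => //; lia.
  + have tp' : (p < t.-1)%N by lia.
    have hI := HIr' tp'; have hS := HSr' tp'; rewrite hI in hq hq' *; rewrite hS in h2.
    rewrite (hvr (ltnW pt)). by apply: cV; try lia; apply: kstU => //; lia.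
  + by subst t; rewrite /= HS'p in h2.
- rewrite hvr // hvl //. by apply: cV; try lia; apply: kstL.
Qed.

Lemma G1 : n_comp big predT = n_comp small predT.
Proof.
pose h (x : 'I_m.+2 * 'I_nn.+1) := V nn m (hv p x.1) x.2.
pose h' (x : 'I_m.+1 * 'I_nn.+1) (_ : x \in predT) := V nn m.+1 (gv p x.1) x.2.
rewrite (@adjunction_n_comp _ _ h small big (@kE_sym _ _ _ _) (@kE_sym _ _ _ _) predT) //.
apply: (@intro_adjunction _ _ h small big (@kE_sym _ _ _ _) predT _ h').
- by [].
- move=> x ax; split.
    have hx := ltn_ord x.1; have hq := ltn_ord x.2.
    have hg : (gv p x.1 < m.+2)%N by rewrite /gv; case: ifP; lia.
    rewrite /h /h' /V /= (inordK hg) inord_val hvgv !inord_val -surjective_pairing.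
    exact: connect0.
  move=> y ay /orP[] e.
    by apply: G1a => //; rewrite -ltnS ltn_ord.
  by rewrite kE_sym; apply: G1a => //; rewrite -ltnS ltn_ord.
- move=> x ax; split.
    have hx := ltn_ord x.1; have hq := ltn_ord x.2.
    have hg : (hv p x.1 < m.+1)%N by rewrite /hv; case: ifP; lia.
    rewrite /h /h' /V /= (inordK hg) !inord_val.
    have [xp|px] := leqP x.1 p.
      by rewrite hvl // gvl // inord_val -surjective_pairing connect0.
    rewrite hvr //.
    have [e|e] := eqVneq (x.1 : nat) p.+1.
      rewrite e /= gvl //.
      have -> : (inord p, x.2) = V nn m.+1 p x.2 by rewrite /V inord_val.
      rewrite [x in connect _ x](V_val x) e.
      apply: cVr; try lia; try (by rewrite -ltnS ltn_ord).
      by apply: kstV; [lia | rewrite HS'p | |].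
    rewrite gvr; last lia. rewrite prednK; last lia.
    by rewrite inord_val -surjective_pairing connect0.
  move=> y /orP[] e.
    by apply: G1b => //; rewrite -ltnS ltn_ord.
  by rewrite kE_sym; apply: G1b => //; rewrite -ltnS ltn_ord.
Qed.

End G1.

Section G2.
Variables (nn m p i : nat) (I I' : nat -> nat) (S S' : nat -> bool).
Hypotheses (Hp : (p < m)%N) (Hi1 : (0 < i)%N) (Hi2 : (i <= nn)%N)
  (HSp : S p = true) (HIp : I p = i) (HS'p : S' p = true) (HI'p : I' p = i)
  (HIl : forall t, (t < p)%N -> I' t = I t) (HSl : forall t, (t < p)%N -> S' t = S t)
  (HIr : forall t, (p <= t)%N -> I' t.+1 = I t) (HSr : forall t, (p <= t)%N -> S' t.+1 = S t).

Lemma HIr2 t : (p < t)%N -> I' t = I t.-1.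
Proof. by case: t => // t h; rewrite HIr. Qed.
Lemma HSr2 t : (p < t)%N -> S' t = S t.-1.
Proof. by case: t => // t h; rewrite HSr. Qed.

Local Notation big := (kE nn.+1 m.+1 I' S').
Local Notation small := (kE nn.+1 m I S).

Lemma G2a t q t' q' : (t <= m.+1)%N -> (q <= nn)%N -> (t' <= m.+1)%N -> (q' <= nn)%N ->
  kst m.+1 I' S' t q t' q' ->
  connect small (V nn m (hv p t) q) (V nn m (hv p t') q').
Proof.
move=> ht hq ht' hq' /kstP[h1 h2 e1 e2 | h1 h2 e1 e2 e3 | h1 h2 e1 e2 e3 | -> -> ->]; try subst t' q'; try subst q.
- have [tp|pt|tp] := ltngtP t p.
  + rewrite !hvl; try lia. apply: cV; try lia. apply: kstV => //; try lia.
    by rewrite -HSl // -HIl.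
  + rewrite (hvr pt) hvr; last lia. apply: cV; try lia. apply: kstV => //; try lia.
    by rewrite -HSr2 -?HIr2 //; try lia; rewrite prednK //; lia.
  + by subst t; rewrite hvl // hvr //= ?connect0.
- have [tp|pt|tp] := ltngtP t p.
  + have hI := HIl tp; have hS := HSl tp; rewrite hI in hq hq' *; rewrite hS in h2.
    rewrite !hvl; try lia. by apply: cV; try lia; apply: kstC => //; lia.
  + have hI := HIr2 pt; have hS := HSr2 pt; rewrite hI in hq hq' *; rewrite hS in h2.
    rewrite (hvr pt). by apply: cV; try lia; apply: kstC => //; lia.
  + subst t; rewrite HI'p -HIp in hq hq' *; rewrite hvl //.
    by apply: cV; try lia; apply: kstC => //; lia.
- have [tp|pt|tp] := ltngtP t p.+1.
  + have tp' : (t.-1 < p)%N by lia.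
    have hI := HIl tp'; have hS := HSl tp'; rewrite hI in hq hq' *; rewrite hS in h2.
    rewrite hvl; try lia. by apply: cV; try lia; apply: kstU => //; lia.
  + have tp' : (p < t.-1)%N by lia.
    have hI := HIr2 tp'; have hS := HSr2 tp'; rewrite hI in hq hq' *; rewrite hS in h2.
    rewrite (hvr (ltnW pt)). by apply: cV; try lia; apply: kstU => //; lia.
  + subst t; rewrite /= HI'p -HIp in hq hq' *; rewrite hvr //=.
    by apply: cV; try lia; apply: kstC => //; lia.
- rewrite (@hvl p 0) // hvr; last lia. by apply: cV; try lia; apply: kstL.
Qed.

Lemma G2b t q t' q' : (t <= m)%N -> (q <= nn)%N -> (t' <= m)%N -> (q' <= nn)%N ->
  kst m I S t q t' q' ->
  connect big (V nn m.+1 (gv p t) q) (V nn m.+1 (gv p t') q').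
Proof.
move=> ht hq ht' hq' /kstP[h1 h2 e1 e2 | h1 h2 e1 e2 e3 | h1 h2 e1 e2 e3 | -> -> ->]; try subst t' q'; try subst q.
- have [tp|pt|tp] := ltngtP t p.
  + rewrite !gvl; try lia. apply: cV; try lia. apply: kstV => //; try lia.
    by rewrite HSl // HIl.
  + rewrite (gvr pt) gvr; last lia. apply: cV; try lia. apply: kstV => //; try lia.
    by rewrite HSr2 ?HIr2 //; try lia.
  + subst t. rewrite gvl // gvr //.
    apply: (@connect_trans _ _ (V nn m.+1 p.+1 q)); apply: cV; try lia.
    * by apply: kstV => //; try lia; rewrite HS'p HI'p -HIp.
    * by apply: kstV => //; try lia; rewrite HSr // HIr.
- have [tp|pt|tp] := ltngtP t p.
  + rewrite !gvl; try lia. apply: cV; try lia. by apply: kstC; rewrite ?HSl ?HIl //; lia.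
  + rewrite (gvr pt). apply: cV; try lia.
    by apply: kstC; rewrite ?HSr ?HIr //; lia.
  + subst t. rewrite gvl //. apply: cV; try lia.
    by apply: kstC; rewrite ?HS'p ?HI'p -?HIp //; lia.
- have [tp|pt] := leqP t p.
  + rewrite gvl //. apply: cV; try lia. by apply: kstU; rewrite ?HSl ?HIl //; lia.
  + rewrite gvr //. apply: cV; try lia.
    by apply: kstU => //=; rewrite ?HSr2 ?HIr2 //; lia.
- rewrite (@gvl p 0) // gvr //. by apply: cV; try lia; apply: kstL.
Qed.

Lemma Zfwd t q t' q' : t = p.+1 -> (q == i.-1) || (q == i) ->
  kst m.+1 I' S' t q t' q' -> (t' == p.+1) && ((q' == i.-1) || (q' == i)).
Proof.
move=> -> hq /kstP[h1 h2 e1 e2 | h1 h2 e1 e2 e3 | h1 h2 e1 e2 e3 | e1 e2 e3]; try subst t' q'.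
- by move: h2; rewrite HSr // HIr // HSp HIp hq.
- by rewrite HIr // HIp !eqxx orbT.
- by rewrite /= HI'p !eqxx orbT.
- lia.
Qed.

Lemma Zbwd t q t' q' : t = p.+1 -> (q == i.-1) || (q == i) ->
  kst m.+1 I' S' t' q' t q -> (t' == p.+1) && ((q' == i.-1) || (q' == i)).
Proof.
move=> -> hq /kstP[h1 h2 e1 e2 | h1 h2 e1 e2 e3 | h1 h2 e1 e2 e3 | e1 e2 e3].
- have et : t' = p by lia. subst t' q. by move: h2; rewrite HS'p HI'p hq.
- by subst t' q'; rewrite HIr // HIp !eqxx.
- by subst t' q'; rewrite /= HI'p !eqxx.
- lia.
Qed.


Lemma G2 : n_comp big predT = (n_comp small predT).+1.
Proof.
pose z0 := V nn m.+1 p.+1 i.-1.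
pose Zp := [pred x : 'I_m.+2 * 'I_nn.+1 |
  ((x.1 : nat) == p.+1) && (((x.2 : nat) == i.-1) || ((x.2 : nat) == i))].
have clZ : closed big Zp.
  apply: intro_closed; first exact: kE_sym.
  move=> x y /orP[] e; rewrite !inE => /andP[/eqP h1 h2].
  - exact: (Zfwd h1 h2 e).
  - exact: (Zbwd h1 h2 e).
have z0Z : z0 \in Zp.
  rewrite inE /z0 /V /= !inordK ?eqxx //; lia.
pose a := [predC connect big z0].
have cla : closed big a := predC_closed (connect_closed (@kE_sym _ _ _ _) z0).
have -> : n_comp big predT = n_comp big (connect big z0) + n_comp big a.
  by rewrite -n_compC; apply: eq_n_comp_r => x; rewrite !inE.
rewrite n_comp_connect; last exact: kE_sym.
rewrite add1n; congr (_.+1).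
pose h (x : 'I_m.+1 * 'I_nn.+1) := V nn m.+1 (gv p x.1) x.2.
pose h' (x : 'I_m.+2 * 'I_nn.+1) (_ : x \in a) := V nn m (hv p x.1) x.2.
rewrite (@adjunction_n_comp _ _ h big small (@kE_sym _ _ _ _) (@kE_sym _ _ _ _) a cla).
  apply: eq_n_comp_r => x; rewrite !inE.
  apply/negP => /(closed_connect clZ); rewrite z0Z => /esym.
  have hx := ltn_ord x.1.
  have hg : (gv p x.1 < m.+2)%N by rewrite /gv; case: ifP; lia.
  rewrite inE /h /V /= (inordK hg) !inord_val.
  by rewrite /gv; case: ifP => hh; rewrite (_ : (_ == p.+1) = false) //; apply/eqP; lia.
apply: (@intro_adjunction _ _ h big small (@kE_sym _ _ _ _) a cla h').
- move=> x ax; split.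
    have hx := ltn_ord x.1; have hq := ltn_ord x.2.
    have hg : (hv p x.1 < m.+1)%N by rewrite /hv; case: ifP; lia.
    rewrite /h /h' /V /= (inordK hg) !inord_val.
    have [xp|px] := leqP x.1 p.
      by rewrite hvl // gvl // inord_val -surjective_pairing connect0.
    rewrite hvr //.
    have [e|e] := eqVneq (x.1 : nat) p.+1.
      rewrite e /= gvl //.
      have -> : (inord p, x.2) = V nn m.+1 p x.2 by rewrite /V inord_val.
      rewrite [x in connect _ x](V_val x) e.
      apply: cVr; try lia; try (by rewrite -ltnS ltn_ord).
      apply: kstV; [lia | | |] => //.
      rewrite HS'p HI'p /=; apply/negP => /orP[] /eqP e2; move: ax; rewrite !inE => /negP; apply.
        by rewrite /z0 [x in connect _ _ x](V_val x) e e2 connect0.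
      rewrite /z0 [x in connect _ _ x](V_val x) e e2.
      apply: cV; try lia.
      by apply: kstC; rewrite ?HSr ?HIr ?HIp //; lia.
    rewrite gvr; last lia. rewrite prednK; last lia.
    by rewrite inord_val -surjective_pairing connect0.
  move=> y ay /orP[] e.
    by apply: G2a => //; rewrite -ltnS ltn_ord.
  by rewrite kE_sym; apply: G2a => //; rewrite -ltnS ltn_ord.
- move=> x ax; split.
    have hx := ltn_ord x.1; have hq := ltn_ord x.2.
    have hg : (gv p x.1 < m.+2)%N by rewrite /gv; case: ifP; lia.
    rewrite /h /h' /V /= (inordK hg) inord_val hvgv !inord_val -surjective_pairing.
    exact: connect0.
  move=> y e; case/orP: e => e.
    by apply: G2b => //; rewrite -ltnS ltn_ord.
  by rewrite kE_sym; apply: G2b => //; rewrite -ltnS ltn_ord.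
Qed.

End G2.

Lemma loops_id nn (u v : bword) x (cu cv : seq bool) : size cu = size u ->
  kloops nn.+1 (u ++ x :: v) (cu ++ false :: cv) = kloops nn.+1 (u ++ v) (cu ++ cv).
Proof.
move=> hc; rewrite !kloopsE.
have Hs : size (u ++ x :: v) = (size (u ++ v)).+1 by rewrite !size_cat addnS.
rewrite Hs.
apply: (@G1 nn (size (u ++ v)) (size u)).
- by rewrite size_cat leq_addr.
- by rewrite nth_cat hc ltnn subnn.
- by move=> t ht; rewrite !nth_cat ht.
- by move=> t ht; rewrite !nth_cat hc ht.
- move=> t ht; rewrite !nth_cat ltnNge (leqW ht) /= ltnNge ht /= subSn //.
- move=> t ht; rewrite !nth_cat hc ltnNge (leqW ht) /= ltnNge ht /= subSn //.
Qed.

Lemma loops_ee nn (u v : bword) x y i (cu cv : seq bool) : size cu = size u ->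
  x.1 = i -> y.1 = i -> (0 < i)%N -> (i <= nn)%N ->
  kloops nn.+1 (u ++ x :: y :: v) (cu ++ true :: true :: cv) =
  (kloops nn.+1 (u ++ x :: v) (cu ++ true :: cv)).+1.
Proof.
move=> hc hx hy hi1 hi2; rewrite !kloopsE.
have Hs : size (u ++ x :: y :: v) = (size (u ++ x :: v)).+1 by rewrite !size_cat addnS.
rewrite Hs.
apply: (@G2 nn (size (u ++ x :: v)) (size u) i).
- by rewrite size_cat -addn1 leq_add2l.
- done.
- done.
- by rewrite nth_cat hc ltnn subnn.
- by rewrite nth_cat ltnn subnn.
- by rewrite nth_cat hc ltnn subnn.
- by rewrite nth_cat ltnn subnn.
- by move=> t ht; rewrite !nth_cat ht.
- by move=> t ht; rewrite !nth_cat hc ht.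
- move=> t ht; rewrite !nth_cat ltnNge (leqW ht) /= ltnNge ht /= subSn //.
  by case: (t - size u)%N => //=; rewrite hx hy.
- move=> t ht; rewrite !nth_cat hc ltnNge (leqW ht) /= ltnNge ht /= subSn //.
Qed.

Lemma loops_pos nn w c : (0 < kloops nn.+1 w c)%N.
Proof.
rewrite /kloops /n_comp_mem; apply/card_gt0P.
pose x : 'I_(size w).+1 * 'I_nn.+1 := (ord0, ord0).
exists (fingraph.root (kedge nn.+1 w c) x); rewrite !inE andbT.
by apply: roots_root; apply: sym_connect_sym => a b; rewrite /kedge orbC.
Qed.

Lemma loops_ext nn w w' c : size w = size w' ->
  (forall t, (nth (1%N, true) w t).1 = (nth (1%N, true) w' t).1) ->
  kloops nn w c = kloops nn w' c.
Proof.
move=> hs hI; rewrite !kloopsE hs; apply: eq_n_comp => x y.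
by apply: eq_connect => a b; rewrite /kE /kst !hI.
Qed.

Local Open Scope ring_scope.

Section Alg.
Variable F : fieldType.

Fixpoint stsum (m : nat) (G : seq bool -> F) : F :=
  if m is m'.+1 then stsum m' (fun c => G (false :: c)) + stsum m' (fun c => G (true :: c))
  else G [::].

Lemma stsum_ext m G H : (forall c, size c = m -> G c = H c) -> stsum m G = stsum m H.
Proof.
elim: m G H => [|m IH] G H h /=; first by rewrite h.
by congr (_ + _); apply: IH => c hc; rewrite h //= hc.
Qed.

Lemma stsumD m G H : stsum m (fun c => G c + H c) = stsum m G + stsum m H.
Proof. by elim: m G H => [|m IH] G H //=; rewrite !IH addrACA. Qed.

Lemma stsumZ m k G : stsum m (fun c => k * G c) = k * stsum m G.
Proof. by elim: m G => [|m IH] G //=; rewrite !IH mulrDr. Qed.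

Lemma stsum_cat m1 m2 G :
  stsum (m1 + m2) G = stsum m1 (fun c1 => stsum m2 (fun c2 => G (c1 ++ c2))).
Proof. by elim: m1 G => [|m1 IH] G //=; rewrite !IH. Qed.

Lemma stsum_tuple m (G : seq bool -> F) :
  \sum_(c : m.-tuple bool) G c = stsum m G.
Proof.
elim: m G => [|m IH] G /=.
  rewrite (eq_bigr (fun _ => G [::])); last by move=> c _; rewrite tuple0.
  by rewrite sumr_const card_tuple expn0.
pose f (p : bool * m.-tuple bool) : m.+1.-tuple bool := [tuple of p.1 :: p.2].
pose g (t : m.+1.-tuple bool) := (thead t, behead_tuple t).
have fK : cancel f g.
  by case=> b t; rewrite /f /g theadE; congr pair; apply: val_inj.
have gK : cancel g f.
  by move=> t; rewrite /f /g /=; apply: val_inj => /=; rewrite [in RHS](tuple_eta t).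
rewrite (reindex f); last by exists g => x _; [apply: fK | apply: gK].
rewrite -(pair_big xpredT xpredT (fun b t => G (b :: tval t))) /= big_bool /=.
by rewrite (IH (fun c => G (true :: c))) (IH (fun c => G (false :: c))) addrC.
Qed.

Definition wprod (ws : seq (bool -> F)) (c : seq bool) : F :=
  \prod_(p <- zip ws c) p.1 p.2.

Lemma wprod_cat w1 w2 c1 c2 : size c1 = size w1 ->
  wprod (w1 ++ w2) (c1 ++ c2) = wprod w1 c1 * wprod w2 c2.
Proof. by move=> h; rewrite /wprod zip_cat ?big_cat. Qed.

Lemma wprod_cons g ws b c : wprod (g :: ws) (b :: c) = g b * wprod ws c.
Proof. by rewrite /wprod /= big_cons. Qed.

Lemma wprodE (T : Type) (x0 : T) (f : T -> bool -> F) (w : seq T) c : size c = size w ->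
  wprod (map f w) c = \prod_(t < size w) f (nth x0 w t) (nth false c t).
Proof.
elim: w c => [|x w IH] [|b c] //=; first by rewrite big_ord0 /wprod big_nil.
by move=> [] /IH h; rewrite wprod_cons big_ord_recl /= h.
Qed.

Variable s : F.
Hypothesis hs : s != 0.
Let d := - (s + s^-1).

Definition Br n (w : bword) (ws : seq (bool -> F)) : F :=
  stsum (size w) (fun c => wprod ws c * d ^+ (kloops n w c).-1).

Definition wt (x : letter) : bool -> F := fun b => cross_factor x.2 b s.
Definition Ws (w : bword) := map wt w.

Lemma Vn_Br n w : Vn n w s = (-1) ^+ size w * Br n w (Ws w).
Proof.
rewrite /Vn /Br; congr (_ * _).
rewrite (@stsum_tuple (size w) (fun c => (\prod_(t < size w) cross_factor (nth (1%N, true) w t).2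
   (nth false c t) s) * (- (s + s^-1)) ^+ (kloops n w c).-1)).
apply: stsum_ext => c hc; congr (_ * _).
by rewrite /Ws (wprodE (1%N, true)).
Qed.

Definition Bp n u x v wu wv b :=
  stsum (size u) (fun cu => stsum (size v) (fun cv =>
     wprod wu cu * wprod wv cv * d ^+ (kloops n (u ++ x :: v) (cu ++ b :: cv)).-1)).

Lemma Br_split n u x v wu g wv : size wu = size u ->
  Br n (u ++ x :: v) (wu ++ g :: wv) =
  g false * Bp n u x v wu wv false + g true * Bp n u x v wu wv true.
Proof.
move=> hw; rewrite /Br /Bp size_cat stsum_cat -!stsumZ -stsumD.
apply: stsum_ext => cu hcu /=.
rewrite -!stsumZ; congr (_ + _); apply: stsum_ext => cv _;
  rewrite wprod_cat ?hw // wprod_cons; ring.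
Qed.

Variable nn : nat.

Lemma Bp_false u x v wu wv : size wu = size u ->
  Bp nn.+1 u x v wu wv false = Br nn.+1 (u ++ v) (wu ++ wv).
Proof.
move=> hw; rewrite /Br /Bp size_cat stsum_cat.
apply: stsum_ext => cu hcu; apply: stsum_ext => cv _.
by rewrite wprod_cat ?hw // loops_id.
Qed.

Lemma Bp_ee u x y v wu g wv i : size wu = size u -> x.1 = i -> y.1 = i ->
  (0 < i)%N -> (i <= nn)%N ->
  Bp nn.+1 u x (y :: v) wu (g :: wv) true = (g false + g true * d) * Bp nn.+1 u x v wu wv true.
Proof.
move=> hw hx hy hi1 hi2; rewrite /Bp -stsumZ; apply: stsum_ext => cu hcu /=.
rewrite mulrDl -!stsumZ; congr (_ + _); apply: stsum_ext => cv _; rewrite !wprod_cons.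
  have := @loops_id nn (rcons u x) v y (rcons cu true) cv.
  rewrite !cat_rcons !size_rcons hcu => -> //; ring.
rewrite (loops_ee _ _ _ hx hy) // -(prednK (loops_pos nn (u ++ x :: v) (cu ++ true :: cv))).
rewrite exprS; ring.
Qed.

Lemma Bp_block u x y v wu g wv i m : size wu = size u -> x.1 = i -> y.1 = i ->
  (0 < i)%N -> (i <= nn)%N ->
  Bp nn.+1 u x (nseq m y ++ v) wu (nseq m g ++ wv) true =
  (g false + g true * d) ^+ m * Bp nn.+1 u x v wu wv true.
Proof.
move=> hw hx hy hi1 hi2; elim: m => [|m IH]; first by rewrite expr0 mul1r.
by rewrite /= (Bp_ee (nseq m y ++ v) g (nseq m g ++ wv) hw hx hy) // IH exprS mulrA.
Qed.

Lemma Bp_letter u i b b' v wu wv :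
  Bp nn.+1 u (i, b) v wu wv true = Bp nn.+1 u (i, b') v wu wv true.
Proof.
rewrite /Bp; apply: stsum_ext => cu _; apply: stsum_ext => cv _.
rewrite (@loops_ext nn.+1 (u ++ (i, b) :: v) (u ++ (i, b') :: v)) //.
  by rewrite !size_cat.
by move=> t; rewrite !nth_cat; case: ifP => // _; case: (t - size u)%N.
Qed.

Fixpoint beta (gF gT : F) m : F :=
  if m is m'.+1 then gF * beta gF gT m' + gT * (gF + gT * d) ^+ m' else 0.

Lemma Br_block u v i b m : (0 < i)%N -> (i <= nn)%N ->
  Br nn.+1 (u ++ nseq m (i, b) ++ v) (Ws (u ++ nseq m (i, b) ++ v)) =
  (wt (i, b) false) ^+ m * Br nn.+1 (u ++ v) (Ws (u ++ v)) +
  beta (wt (i, b) false) (wt (i, b) true) m * Bp nn.+1 u (i, true) v (Ws u) (Ws v) true.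
Proof.
move=> hi1 hi2; elim: m => [|m IH]; first by rewrite /= expr0 mul1r mul0r addr0.
rewrite [nseq m.+1 _ ++ _]/=.
have sz w : size (Ws w) = size w by rewrite /Ws size_map.
have e1 : Ws (u ++ (i,b) :: (nseq m (i,b) ++ v)) = Ws u ++ wt (i,b) :: Ws (nseq m (i,b) ++ v).
  by rewrite /Ws map_cat.
rewrite e1 Br_split ?sz // Bp_false ?sz //.
have e2 : Ws u ++ Ws (nseq m (i,b) ++ v) = Ws (u ++ nseq m (i,b) ++ v).
  by rewrite /Ws -map_cat.
rewrite e2 IH.
have e3 : Ws (nseq m (i,b) ++ v) = nseq m (wt (i,b)) ++ Ws v by rewrite /Ws map_cat map_nseq.
rewrite e3 (@Bp_block u (i,b) (i,b) v (Ws u) (wt (i,b)) (Ws v) i m) ?sz //.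
rewrite (Bp_letter u i b true) /=.
set A := wt (i, b) false; set B := wt (i, b) true; set X := Br _ _ _; set Y := Bp _ _ _ _ _ _ _.
set Z := beta _ _ _; set G := (A + B * d) ^+ m.
rewrite exprS; ring.
Qed.


Hypothesis hs2 : s ^+ 2 + 1 != 0.

Lemma beta_cf gF gT m :
  (s ^+ 2 + 1) * beta gF gT m = - s * ((gF + gT * d) ^+ m - gF ^+ m).
Proof.
have hd : s ^+ 2 + 1 = - s * d by rewrite /d; field.
elim: m => [|m IH] /=; first by rewrite !expr0 subrr mulr0 mulr0.
have -> : (s ^+ 2 + 1) * (gF * beta gF gT m + gT * (gF + gT * d) ^+ m) =
  gF * ((s ^+ 2 + 1) * beta gF gT m) + (s ^+ 2 + 1) * gT * (gF + gT * d) ^+ m by ring.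
rewrite IH hd !exprS; ring.
Qed.

Lemma cf1 (a : int) : (-1) ^+ `|a|%N = ((-1 : F) ^ a).
Proof. by case: a => m //=; rewrite /exprz -exprVn invrN1. Qed.

Lemma cf2 (a : int) : (cross_factor (0 <= a) false s) ^+ `|a|%N = s ^ a.
Proof. by case: a => m //=; rewrite /exprz -exprVn. Qed.

Lemma cf3 (a : int) : (cross_factor (0 <= a) false s + cross_factor (0 <= a) true s * d) ^+ `|a|%N
   = (-1) ^+ `|a|%N * (s ^ a) ^+ 3.
Proof.
case: a => m /=.
  have -> : s + s ^+ 2 * d = (-1) * s ^+ 3 by rewrite /d; field.
  by rewrite exprMn -!exprM mulnC.
have -> : s^-1 + s ^- 2 * d = (-1) * (s^-1) ^+ 3 by rewrite /d; field.
by rewrite exprMn /exprz -exprVn -!exprM mulnC.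
Qed.

Lemma P0E a : Pcoef false a s = (s ^ a) ^+ 3 + (-1) ^ a * (s ^ a * s ^+ 2).
Proof. by rewrite /Pcoef (@expfzDr _ s a 2 hs) [3 * a]mulrC -exprz_exp. Qed.

Lemma P1E a : Pcoef true a s = (s ^ a) ^+ 3 * s^-1 - (-1) ^ a * (s ^ a * s^-1).
Proof.
rewrite /Pcoef (@expfzDr _ s (3 * a) (-1) hs) [3 * a]mulrC -exprz_exp.
rewrite (@expfzDr _ (-1) a 1) ?oppr_eq0 ?oner_eq0 // expr1z mulrN1 (@expfzDr _ s a (-1) hs).
by rewrite mulNr.
Qed.

Lemma block u v i (a : int) : (0 < i)%N -> (i <= nn)%N ->
  (s ^+ 2 + 1) * Vn nn.+1 (u ++ gpow i a ++ v) s =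
  Pcoef false a s * Vn nn.+1 (u ++ v) s + Pcoef true a s * Vn nn.+1 (u ++ (i, true) :: v) s.
Proof.
move=> hi1 hi2.
have sz w : size (Ws w) = size w by rewrite /Ws size_map.
have hE : Br nn.+1 (u ++ (i,true) :: v) (Ws (u ++ (i,true) :: v)) =
    s * Br nn.+1 (u ++ v) (Ws (u++v)) + s ^+ 2 * Bp nn.+1 u (i,true) v (Ws u) (Ws v) true.
  have -> : Ws (u ++ (i,true) :: v) = Ws u ++ wt (i, true) :: Ws v by rewrite /Ws map_cat.
  rewrite Br_split ?sz // Bp_false ?sz //.
  by rewrite /Ws -map_cat.
rewrite !Vn_Br hE /gpow Br_block // P0E P1E.
have hb := beta_cf (wt (i, 0 <= a) false) (wt (i, 0 <= a) true) `|a|%N.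
rewrite /wt /= in hb *.
rewrite cf2 cf3 in hb *.
rewrite -cf1 !size_cat size_nseq /= !exprD [(-1) ^+ (size v).+1]exprS.
rewrite -(@signr_odd F `|a|%N) in hb *.
move: hb; move: (s ^ a) (beta _ _ _) (Br _ _ _) (Bp _ _ _ _ _ _ _) => X Be B0 E.
move: ((-1) ^+ size u) ((-1) ^+ size v) => su sv.
case: (odd _); rewrite ?expr1 ?expr0 => hb.
  have hBe : Be = - s * (-1 * X ^+ 3 - X) / (s ^+ 2 + 1).
    by apply: (mulfI hs2); rewrite hb; field.
  by rewrite hBe; field; rewrite ?hs ?hs2.
have hBe : Be = - s * (1 * X ^+ 3 - X) / (s ^+ 2 + 1).
  by apply: (mulfI hs2); rewrite hb; field.
by rewrite hBe; field; rewrite ?hs ?hs2.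
Qed.

End Alg.

Definition W k (ib : nat -> nat) (ab : nat -> int) : bword :=
  flatten [seq gpow (ib j) (ab j) | j <- iota 0 k].

Lemma W_S k ib ab : W k.+1 ib ab = gpow (ib 0%N) (ab 0%N) ++ W k (fun j => ib j.+1) (fun j => ab j.+1).
Proof.
rewrite /W /= -[1%N]/(1 + 0)%N iotaDl -map_comp /=.
by congr (_ ++ flatten _); apply: eq_map.
Qed.

Lemma pword_W k (i : 'I_k -> nat) (a : 'I_k -> int) (ib : nat -> nat) (ab : nat -> int) :
  (forall j : 'I_k, ib j = i j) -> (forall j : 'I_k, ab j = a j) -> pword i a = W k ib ab.
Proof.
move=> h1 h2; rewrite /pword /W -val_enum_ord -map_comp; congr flatten.
by apply: eq_map => j /=; rewrite h1 h2.
Qed.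

Section Final.
Variable F : fieldType.
Variable s : F.
Hypothesis hs : s != 0.
Variable nn : nat.
Hypothesis hs2 : s ^+ 2 + 1 != 0.

Lemma GL k : forall (ib : nat -> nat) (ab : nat -> int) u, (forall j, (j < k)%N -> (0 < ib j)%N && (ib j <= nn)%N) ->
  (s ^+ 2 + 1) ^+ k * Vn nn.+1 (u ++ W k ib ab) s =
  stsum k (fun c => (\prod_(j < k) Pcoef (nth false c j) (ab j) s) *
                  Vn nn.+1 (u ++ W k ib (fun j => (nth false c j : nat)%:Z)) s).
Proof.
elim: k => [|k IH] ib ab u hib.
  by rewrite /= expr0 !mul1r big_ord0 mul1r.
have /andP[h1 h2] := hib 0%N isT.
rewrite W_S exprS -mulrA mulrCA (block hs hs2 _ _ _ h1 h2) mulrDr (mulrCA _ (Pcoef false _ _)) (mulrCA _ (Pcoef true _ _)).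

rewrite (IH _ _ u); last by move=> j hj; apply: hib.
have -> : u ++ (ib 0%N, true) :: W k (fun j => ib j.+1) (fun j => ab j.+1) =
   rcons u (ib 0%N, true) ++ W k (fun j => ib j.+1) (fun j => ab j.+1) by rewrite cat_rcons.
rewrite (IH _ _ (rcons u (ib 0%N, true))); last by move=> j hj; apply: hib.
rewrite /= -!stsumZ; congr (_ + _); apply: stsum_ext => c _;
  rewrite big_ord_recl -mulrA; congr (_ * (_ * _)).
- by rewrite W_S.
- by rewrite W_S cat_rcons.
Qed.

End Final.

Unset Implicit Arguments.

Theorem theorem1p2 (F : fieldType) (s : F) (hs : s != 0) (hs2 : s ^+ 2 + 1 != 0)
    (n k : nat) (hn : (2 <= n)%N) (hk : (1 <= k)%N)
    (i : 'I_k -> nat) (hi : forall j, (1 <= i j <= n.-1)%N) (a : 'I_k -> int) :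
  Vn n (pword i a) s =
  ((s ^+ 2 + 1) ^+ k)^-1 *
  \sum_(e : {ffun 'I_k -> bool})
     (\prod_(j < k) Pcoef (e j) (a j) s) *
     Vn n (pword i (fun j => (e j : nat)%:Z)) s.
Proof.
case: n hn hi => [|nn] // hn hi.
case: k hk i hi a => [|k] // hk i hi a.
pose ib (j : nat) := i (inord j). pose ab (j : nat) := a (inord j).
have hib j : (j < k.+1)%N -> (0 < ib j)%N && (ib j <= nn)%N.
  by move=> _; apply: hi.
have key := @GL F s hs nn hs2 k.+1 ib ab [::] hib.
apply: (mulfI (expf_neq0 k.+1 hs2)); rewrite [in RHS]mulrA divff ?expf_neq0 // mul1r.
rewrite (@pword_W _ i a ib ab); last 2 first.
- by move=> j; rewrite /ib inord_val.
- by move=> j; rewrite /ab inord_val.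
rewrite key -stsum_tuple.
rewrite [RHS](reindex (fun c : k.+1.-tuple bool => [ffun j => tnth c j])); last first.
  exists (fun e : {ffun 'I_k.+1 -> bool} => [tuple e j | j < k.+1]) => x _.
    by apply: eq_from_tnth => j; rewrite tnth_mktuple ffunE.
  by apply/ffunP => j; rewrite ffunE tnth_mktuple.
apply: eq_bigr => c _; congr (_ * _).
  by apply: eq_bigr => j _; rewrite ffunE (tnth_nth false) /ab inord_val.
rewrite cat0s (@pword_W _ i _ ib (fun j => (nth false c j : nat)%:Z)) //.
- by move=> j; rewrite /ib inord_val.
- by move=> j; rewrite ffunE (tnth_nth false).
Qed.
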